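(* Let $n,m\ge 2$. Suppose there exists a total $2$-dominating set $S$ of $K_n\Box K_m$ of minimum cardinality (i.e. $|S|=\gamma_{2t}(K_n\Box K_m)$) such that $S\cap(\{v\}\times V(K_m))\neq\emptyset$ for every $v\in V(K_n)$ and $S\cap(V(K_n)\times\{w\})\neq\emptyset$ for every $w\in V(K_m)$. Then \[ \gamma_{2t}(K_{n+4}\Box K_{m+4})=\gamma_{2t}(K_n\Box K_m)+6. \]
   Context: For a graph $G=(V,E)$, a set $S\subseteq V$ is a total $2$-dominating set if every vertex of $V$ (including those in $S$) is adjacent to at least $2$ vertices of $S$; $\gamma_{2t}(G)$ is the minimum cardinality of such a set. $G\Box H$ denotes the Cartesian product: vertex set $V(G)\times V(H)$, with $(u_1,v_1)\sim(u_2,v_2)$ iff either $u_1=u_2$ and $v_1\sim v_2$, or $v_1=v_2$ and $u_1\sim u_2$. $K_n$ is the complete graph on $n$ vertices. *)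

(* Defs.v *)
From mathcomp Require Import all_boot.
Set Implicit Arguments. Unset Strict Implicit. Unset Printing Implicit Defensive.

Definition complete_rel (n : nat) : rel 'I_n := fun x y => x != y.

Definition cart_rel (T1 T2 : finType) (e1 : rel T1) (e2 : rel T2) : rel (T1 * T2) :=
  fun u v => ((u.1 == v.1) && e2 u.2 v.2) || ((u.2 == v.2) && e1 u.1 v.1).

Definition rook_rel (n m : nat) : rel ('I_n * 'I_m) :=
  cart_rel (@complete_rel n) (@complete_rel m).

Arguments rook_rel : clear implicits.

Definition total2dom (T : finType) (e : rel T) (S : {set T}) : bool :=
  [forall x, 2 <= #|[set y in S | e x y]|].

(* gamma_{2t}(G): minimum cardinality of a total 2-dominating set
   (if none exists, the value is #|V|, irrelevant for our use). *)
Definition gamma2t (T : finType) (e : rel T) : nat :=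
  #|arg_min [set: T] (total2dom e) (fun S : {set T} => #|S|)|.

(* Main.v *)
Require Import Defs.
From mathcomp Require Import all_boot.
From mathcomp Require Import zify.
Set Implicit Arguments. Unset Strict Implicit. Unset Printing Implicit Defensive.

Lemma card_part (T K : finType) (f : T -> K) (A : {set T}) :
  #|A| = \sum_k #|[set y in A | f y == k]|.
Proof.
rewrite -sum1_card (partition_big f predT) //=; apply: eq_bigr => k _.
by rewrite -sum1_card; apply: eq_bigl => y; rewrite inE.
Qed.

Lemma sum_b2n (K : finType) (b : pred K) : \sum_k (b k : nat) = #|[set k | b k]|.
Proof.
rewrite -sum1_card [in RHS]big_mkcond /=; apply: eq_bigr => k _; rewrite inE.
by case: (b k).
Qed.

Lemma sum_eq_termwise (K : finType) (F G : K -> nat) :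
  (forall k, F k <= G k) -> \sum_k F k = \sum_k G k -> forall k, F k = G k.
Proof.
move=> le s k.
have e : \sum_k G k = \sum_k (G k - F k) + \sum_k F k.
  by rewrite -big_split /=; apply: eq_bigr => i _; rewrite subnK.
move: e; rewrite -s => /eqP; rewrite -{1}[X in X == _]add0n eqn_add2r eq_sym.
rewrite sum_nat_eq0 => /forallP /(_ k) /implyP /(_ isT) /eqP.
by move: (le k); lia.
Qed.

Section Side.
Variables (T K L : finType) (S : {set T}) (f : T -> K) (g : T -> L).
Let rf k := #|[set y in S | f y == k]|.
Let rg l := #|[set y in S | g y == l]|.
Hypothesis H4 : forall y, y \in S -> 4 <= rf (f y) + rg (g y).
Hypothesis Hg1 : forall l, 1 <= rg l.

Let A' := [set y in S | rf (f y) == 1].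
Let d1 l := #|[set y in A' | g y == l]|.

Lemma d1_le l : d1 l <= rg l.
Proof. by apply: subset_leq_card; apply/subsetP => y; rewrite !inE => /andP[/andP[-> _] ->]. Qed.

Lemma d1_pos l : 0 < d1 l -> 3 <= rg l.
Proof.
case/card_gt0P => y; rewrite !inE => /andP[/andP[yS /eqP r1] /eqP gl].
by move: (H4 yS); rewrite r1 gl; lia.
Qed.

Lemma sum_d1 : \sum_l d1 l = #|[set k | rf k == 1]|.
Proof.
rewrite -(card_part g A') (card_part f A') -sum_b2n; apply: eq_bigr => k _.
case: (boolP (rf k == 1)) => /= h.
  rewrite -(eqP h) /rf; apply: eq_card => y; rewrite /A' !inE.
  by case: (boolP (f y == k)) => [/eqP->|]; rewrite ?h ?andbT ?andbF.
apply/eqP; rewrite cards_eq0; apply/eqP/setP => y; rewrite /A' !inE.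
by case: (boolP (f y == k)) => [/eqP->|]; rewrite ?(negbTE h) ?andbF ?andbT.
Qed.

Lemma side_term l : 3 + d1 l <= 2 * rg l + (rg l == 1).
Proof.
have := d1_le l; have := @d1_pos l; have := Hg1 l.
case: (boolP (rg l == 1)) => [/eqP|] h /=; lia.
Qed.

Lemma side_ineq :
  3 * #|L| + #|[set k | rf k == 1]| <= 2 * #|S| + #|[set l | rg l == 1]|.
Proof.
have e1 : \sum_l (3 + d1 l) = 3 * #|L| + #|[set k | rf k == 1]|.
  by rewrite big_split /= sum_nat_const sum_d1 mulnC.
have e2 : \sum_l (2 * rg l + (rg l == 1)) = 2 * #|S| + #|[set l | rg l == 1]|.
  by rewrite big_split /= sum_b2n -big_distrr /= -card_part.
rewrite -e1 -e2; apply: leq_sum => l _; exact: side_term.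
Qed.

Lemma side_eq :
  3 * #|L| + #|[set k | rf k == 1]| = 2 * #|S| + #|[set l | rg l == 1]| ->
  2 * #|[set k | rf k == 1]| + 3 * #|L| = 3 * #|S|.
Proof.
move=> E.
have e1 : \sum_l (3 + d1 l) = 3 * #|L| + #|[set k | rf k == 1]|.
  by rewrite big_split /= sum_nat_const sum_d1 mulnC.
have e2 : \sum_l (2 * rg l + (rg l == 1)) = 2 * #|S| + #|[set l | rg l == 1]|.
  by rewrite big_split /= sum_b2n -big_distrr /= -card_part.
have tw := sum_eq_termwise side_term (etrans e1 (etrans E (esym e2))).
have t2 l : 2 * d1 l + 3 = 3 * rg l.
  have := tw l; have := d1_le l; have := @d1_pos l; have := Hg1 l.
  case: (boolP (rg l == 1)) => [/eqP|] h /=; lia.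
have : \sum_l (2 * d1 l + 3) = \sum_l (3 * rg l) by apply: eq_bigr => l _; exact: t2.
rewrite big_split /= sum_nat_const -big_distrr -big_distrr /= sum_d1 -card_part.
by rewrite [_ * 3]mulnC.
Qed.
End Side.


Section Rook.
Variables N M : nat.
Implicit Types S : {set 'I_N * 'I_M}.

Definition rS S (i : 'I_N) := #|[set y in S | y.1 == i]|.
Definition cS S (j : 'I_M) := #|[set y in S | y.2 == j]|.

Lemma nbr_bound S x :
  #|[set y in S | rook_rel N M x y]| <=
  #|[set y in S | y.1 == x.1] :\ x| + #|[set y in S | y.2 == x.2] :\ x|.
Proof.
have sub : [set y in S | rook_rel N M x y] \subset
  ([set y in S | y.1 == x.1] :\ x) :|: ([set y in S | y.2 == x.2] :\ x); last first.
  by apply: leq_trans (subset_leq_card sub) _; rewrite cardsU leq_subr.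
apply/subsetP => y; rewrite !inE /rook_rel /cart_rel /complete_rel.
case: x => a b; case: y => c d /=.
case/andP => yS /orP [/andP[/eqP-> h]|/andP[/eqP-> h]]; apply/orP.
  by left; rewrite yS eqxx andbT xpair_eqE eqxx /= eq_sym h.
right; rewrite yS eqxx andbT xpair_eqE eqxx andbT; rewrite andbT eq_sym; exact: h.
Qed.

Lemma V1 S x : total2dom (rook_rel N M) S -> x \in S -> 4 <= rS S x.1 + cS S x.2.
Proof.
move=> /forallP /(_ x) h xS; have := leq_trans h (nbr_bound S x).
rewrite /rS /cS (cardsD1 x [set y in S | y.1 == x.1]) (cardsD1 x [set y in S | y.2 == x.2]).
by rewrite !inE xS !eqxx /= => H; rewrite addnACA; apply: (leq_add (leqnn 2) H).
Qed.

Lemma V2 S i j : total2dom (rook_rel N M) S -> rS S i = 0 -> 2 <= cS S j.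
Proof.
move=> /forallP /(_ (i, j)) h r0; have := leq_trans h (nbr_bound S (i, j)).
move: r0; rewrite /rS /cS /= => /eqP; rewrite cards_eq0 => /eqP ->.
rewrite set0D cards0 add0n => h2; apply: leq_trans h2 _.
by apply: subset_leq_card; apply: subD1set.
Qed.

Lemma V3 S i j : total2dom (rook_rel N M) S -> cS S j = 0 -> 2 <= rS S i.
Proof.
move=> /forallP /(_ (i, j)) h r0; have := leq_trans h (nbr_bound S (i, j)).
move: r0; rewrite /rS /cS /= => /eqP; rewrite cards_eq0 => /eqP ->.
rewrite set0D cards0 addn0 => h2; apply: leq_trans h2 _.
by apply: subset_leq_card; apply: subD1set.
Qed.

Lemma LB_row S i : total2dom (rook_rel N M) S -> rS S i = 0 -> 2 * M <= #|S|.
Proof.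
move=> T r0; rewrite (card_part snd S).
have : \sum_(j < M) 2 <= \sum_(j < M) cS S j by apply: leq_sum => j _; exact: V2 T r0.
by rewrite sum_nat_const card_ord mulnC.
Qed.

Lemma LB_col S j : total2dom (rook_rel N M) S -> cS S j = 0 -> 2 * N <= #|S|.
Proof.
move=> T r0; rewrite (card_part fst S).
have : \sum_(i < N) 2 <= \sum_(i < N) rS S i by apply: leq_sum => i _; exact: V3 T r0.
by rewrite sum_nat_const card_ord mulnC.
Qed.

Lemma LB_A S : total2dom (rook_rel N M) S -> (forall i, 0 < rS S i) ->
  (forall j, 0 < cS S j) ->
  3 * (N + M) <= 4 * #|S| /\ (4 * #|S| = 3 * (N + M) -> (3 * M + 7 * N) %% 8 = 0).
Proof.
move=> T hr hc.
have H1 : forall y, y \in S -> 3 < rS S y.1 + cS S y.2 by move=> y; exact: V1.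
have H2 : forall y, y \in S -> 3 < cS S y.2 + rS S y.1 by move=> y yS; rewrite addnC; exact: V1.
have I1 := @side_ineq _ _ _ S fst snd H1 hc.
have I2 := @side_ineq _ _ _ S snd fst H2 hr.
rewrite !card_ord in I1 I2.
split; first lia.
move=> E.
have := @side_eq _ _ _ S fst snd H1 hc; rewrite !card_ord.
move: I1 I2 E.
set a := #|[set k | _ == 1]|; set b := #|[set l | _ == 1]|.
lia.
Qed.
End Rook.


Definition cc n m := (3*(n+m)+3) %/ 4 + (((n+m) %% 4 == 0) && ((3*m+7*n) %% 8 != 0)).
Definition reg n m := cc n m < 2 * minn n m.
Definition sok n m := ((n == 1) && (3 <= m <= cc n m)) || ((m == 1) && (3 <= n <= cc n m)).

Lemma cc_lo n m : 3*(n+m) <= 4 * cc n m.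
Proof. rewrite /cc; lia. Qed.
Lemma cc_hi n m : 4 * cc n m <= 3*(n+m) + 7.
Proof. rewrite /cc; lia. Qed.
Lemma cc_peel13 n m : 1 <= n -> 3 <= m -> cc (n-1) (m-3) + 3 = cc n m.
Proof. rewrite /cc; lia. Qed.
Lemma cc_peel31 n m : 3 <= n -> 1 <= m -> cc (n-3) (m-1) + 3 = cc n m.
Proof. rewrite /cc; lia. Qed.

Definition base n m := [|| (n == 3) && (m == 3), (n == 4) && (m == 5), (n == 5) && (m == 4),
  (n == 5) && (m == 5), (n == 5) && (m == 6), (n == 6) && (m == 5), (n == 6) && (m == 6)
  | (n == 7) && (m == 7)].

Definition P13 n m := reg n m ==> ~~ base n m ==>
  [&& 1 <= n, 3 <= m & reg (n-1) (m-3) || sok (n-1) (m-3)].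
Definition P31 n m := reg n m ==> ~~ base n m ==>
  [&& 3 <= n, 1 <= m & reg (n-3) (m-1) || sok (n-3) (m-1)].

Lemma small13 n : n < 12 -> P13 n n && P13 n n.+1.
Proof. by case: n => [|[|[|[|[|[|[|[|[|[|[|[|n]]]]]]]]]]]]. Qed.
Lemma small31 m : m < 12 -> P31 m.+1 m.
Proof. by case: m => [|[|[|[|[|[|[|[|[|[|[|[|m]]]]]]]]]]]]. Qed.

Lemma land13 n m : reg n m -> ~~ base n m -> n <= m ->
  [&& 1 <= n, 3 <= m & reg (n-1) (m-3) || sok (n-1) (m-3)].
Proof.
move=> Hr hb hnm; have lo := cc_lo n m; have hi := cc_hi n m.
have Hr' := Hr; rewrite /reg in Hr'.
case: (leqP (n+2) m) => h2.
  have h1 : 1 <= n by lia.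
  have e := cc_peel13 h1 (_ : 3 <= m); rewrite h1 /= (_ : 3 <= m) /=; last by lia.
  by apply/orP; left; rewrite /reg; lia.
case: (leqP 12 n) => h12.
  have h1 : 1 <= n by lia.
  have e := cc_peel13 h1 (_ : 3 <= m); rewrite h1 /= (_ : 3 <= m) /=; last by lia.
  by apply/orP; left; rewrite /reg; lia.
have /andP [p1 p2] := small13 h12.
have [e|e] : m = n \/ m = n.+1 by lia.
  by subst m; move: p1; rewrite /P13 Hr hb.
by subst m; move: p2; rewrite /P13 Hr hb.
Qed.

Lemma land31 n m : reg n m -> ~~ base n m -> m < n ->
  [&& 3 <= n, 1 <= m & reg (n-3) (m-1) || sok (n-3) (m-1)].
Proof.
move=> Hr hb hnm; have lo := cc_lo n m; have hi := cc_hi n m.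
have Hr' := Hr; rewrite /reg in Hr'.
case: (leqP (m+2) n) => h2.
  have h1 : 1 <= m by lia.
  have e := cc_peel31 (_ : 3 <= n) h1; rewrite h1 (_ : 3 <= n) /=; last by lia.
  by apply/orP; left; rewrite /reg; lia.
case: (leqP 12 m) => h12.
  have h1 : 1 <= m by lia.
  have e := cc_peel31 (_ : 3 <= n) h1; rewrite h1 (_ : 3 <= n) /=; last by lia.
  by apply/orP; left; rewrite /reg; lia.
have p := small31 h12.
have e : n = m.+1 by lia.
by subst n; move: p; rewrite /P31 Hr hb.
Qed.


Definition Good n m k := exists S : {set 'I_n * 'I_m},
  [/\ total2dom (rook_rel n m) S, (forall i, exists j, (i, j) \in S),
      (forall j, exists i, (i, j) \in S) & #|S| <= k].

Lemma Good_weak n m k k' : k <= k' -> Good n m k -> Good n m k'.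
Proof. by move=> le [S [T R C K]]; exists S; split => //; apply: leq_trans le. Qed.

Lemma two (n m : nat) (S : {set 'I_n * 'I_m}) x y1 y2 :
  y1 \in S -> y2 \in S -> y1 != y2 -> rook_rel n m x y1 -> rook_rel n m x y2 ->
  1 < #|[set y in S | rook_rel n m x y]|.
Proof. by move=> h1 h2 h3 h4 h5; apply/card_gt1P; exists y1, y2; rewrite !inE h1 h2 h3 h4 h5. Qed.

Lemma rookE n m (a c : 'I_n) (b d : 'I_m) :
  rook_rel n m (a, b) (c, d) = ((a == c) && (b != d)) || ((b == d) && (a != c)).
Proof. by []. Qed.

Lemma block n1 m1 k1 n2 m2 k2 : Good n1 m1 k1 -> Good n2 m2 k2 ->
  Good (n1 + n2) (m1 + m2) (k1 + k2).
Proof.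
move=> [S1 [T1 R1 C1 K1]] [S2 [T2 R2 C2 K2]].
pose f1 (p : 'I_n1 * 'I_m1) := (lshift n2 p.1, lshift m2 p.2).
pose f2 (p : 'I_n2 * 'I_m2) := (rshift n1 p.1, rshift m1 p.2).
have in1 p : p \in S1 -> f1 p \in f1 @: S1 :|: f2 @: S2 by move=> h; rewrite inE imset_f.
have in2 p : p \in S2 -> f2 p \in f1 @: S1 :|: f2 @: S2 by move=> h; rewrite inE imset_f ?orbT.
exists (f1 @: S1 :|: f2 @: S2); split.
- apply/forallP => -[i j]; rewrite -(splitK i) -(splitK j).
  case: (split i) => a; case: (split j) => b /=.
  + move/forallP: T1 => /(_ (a, b)) /card_gt1P [[y1 z1] [[y2 z2] []]].
    rewrite !inE => /andP [h1 r1] /andP [h2 r2] ne.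
    apply: (two (in1 _ h1) (in1 _ h2)).
    * by move: ne; rewrite /f1 /= !xpair_eqE !eq_shift.
    * by move: r1; rewrite /f1 /= !rookE !eq_shift.
    * by move: r2; rewrite /f1 /= !rookE !eq_shift.
  + have [j1 h1] := R1 a; have [i2 h2] := C2 b.
    apply: (two (in1 _ h1) (in2 _ h2)).
    * by rewrite /f1 /f2 /= !xpair_eqE !eq_shift.
    * by rewrite /f1 /= !rookE !eq_shift eqxx.
    * by rewrite /f2 /= !rookE !eq_shift eqxx.
  + have [j2 h2] := R2 a; have [i1 h1] := C1 b.
    apply: (two (in2 _ h2) (in1 _ h1)).
    * by rewrite /f1 /f2 /= !xpair_eqE !eq_shift.
    * by rewrite /f2 /= !rookE !eq_shift eqxx.
    * by rewrite /f1 /= !rookE !eq_shift eqxx orbT.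
  + move/forallP: T2 => /(_ (a, b)) /card_gt1P [[y1 z1] [[y2 z2] []]].
    rewrite !inE => /andP [h1 r1] /andP [h2 r2] ne.
    apply: (two (in2 _ h1) (in2 _ h2)).
    * by move: ne; rewrite /f2 /= !xpair_eqE !eq_shift.
    * by move: r1; rewrite /f2 /= !rookE !eq_shift.
    * by move: r2; rewrite /f2 /= !rookE !eq_shift.
- move=> i; rewrite -(splitK i); case: (split i) => a /=.
  + by have [j h] := R1 a; exists (lshift m2 j); exact: (in1 _ h).
  + by have [j h] := R2 a; exists (rshift m1 j); exact: (in2 _ h).
- move=> j; rewrite -(splitK j); case: (split j) => b /=.
  + by have [i h] := C1 b; exists (lshift n2 i); exact: (in1 _ h).
  + by have [i h] := C2 b; exists (rshift n1 i); exact: (in2 _ h).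
- rewrite cardsU; apply: leq_trans (leq_subr _ _) _.
  by apply: leq_add; apply: leq_trans (leq_imset_card _ _) _.
Qed.

Lemma other2 k (j : 'I_k) : 3 <= k -> exists j1 j2 : 'I_k, [/\ j1 != j, j2 != j & j1 != j2].
Proof.
move=> hk; have : 1 < #|[set~ j]| by rewrite cardsC1 card_ord; lia.
case/card_gt1P => j1 [j2 []]; rewrite !inE => h1 h2 h3.
by exists j1, j2; split.
Qed.

Lemma star_row k : 3 <= k -> Good 1 k k.
Proof.
move=> hk; exists [set: 'I_1 * 'I_k]; split.
- apply/forallP => -[i j]; have [j1 [j2 [h1 h2 h3]]] := other2 j hk.
  apply: (@two _ _ _ _ (i, j1) (i, j2)); rewrite ?inE //.
  + by rewrite xpair_eqE eqxx.
  + by rewrite rookE eqxx eq_sym h1.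
  + by rewrite rookE eqxx eq_sym h2.
- by move=> i; exists (Ordinal (leq_trans (isT : 1 <= 3) hk)); rewrite inE.
- by move=> j; exists ord0; rewrite inE.
- by rewrite cardsT card_prod !card_ord mul1n.
Qed.

Lemma star_col k : 3 <= k -> Good k 1 k.
Proof.
move=> hk; exists [set: 'I_k * 'I_1]; split.
- apply/forallP => -[i j]; have [i1 [i2 [h1 h2 h3]]] := other2 i hk.
  apply: (@two _ _ _ _ (i1, j) (i2, j)); rewrite ?inE //.
  + by rewrite xpair_eqE eqxx andbT.
  + by rewrite rookE eqxx eq_sym h1 orbT.
  + by rewrite rookE eqxx eq_sym h2 orbT.
- by move=> i; exists ord0; rewrite inE.
- by move=> j; exists (Ordinal (leq_trans (isT : 1 <= 3) hk)); rewrite inE.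
- by rewrite cardsT card_prod !card_ord muln1.
Qed.

Definition DS : {set 'I_3 * 'I_3} := [set p | (p.1 == ord0) || (p.2 == ord0)].
Definition o0 : 'I_3 := Ordinal (isT : 0 < 3).
Definition o1 : 'I_3 := Ordinal (isT : 1 < 3).
Definition o2 : 'I_3 := Ordinal (isT : 2 < 3).
Lemma I3 (i : 'I_3) : [\/ i = o0, i = o1 | i = o2].
Proof. by case: i => [[|[|[|i]]] Hi]; [constructor 1|constructor 2|constructor 3|]; try (by apply: val_inj). Qed.

Lemma ds_good : Good 3 3 5.
Proof.
exists DS; split.
- apply/forallP => -[i j].
  case: (I3 i) => ->; case: (I3 j) => ->.
  + by apply: (@two _ _ _ _ (o0,o1) (o1,o0)); rewrite /rook_rel /cart_rel /complete_rel ?inE; exact: erefl.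
  + by apply: (@two _ _ _ _ (o0,o0) (o0,o2)); rewrite /rook_rel /cart_rel /complete_rel ?inE; exact: erefl.
  + by apply: (@two _ _ _ _ (o0,o0) (o0,o1)); rewrite /rook_rel /cart_rel /complete_rel ?inE; exact: erefl.
  + by apply: (@two _ _ _ _ (o0,o0) (o2,o0)); rewrite /rook_rel /cart_rel /complete_rel ?inE; exact: erefl.
  + by apply: (@two _ _ _ _ (o0,o1) (o1,o0)); rewrite /rook_rel /cart_rel /complete_rel ?inE; exact: erefl.
  + by apply: (@two _ _ _ _ (o0,o2) (o1,o0)); rewrite /rook_rel /cart_rel /complete_rel ?inE; exact: erefl.
  + by apply: (@two _ _ _ _ (o0,o0) (o1,o0)); rewrite /rook_rel /cart_rel /complete_rel ?inE; exact: erefl.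
  + by apply: (@two _ _ _ _ (o0,o1) (o2,o0)); rewrite /rook_rel /cart_rel /complete_rel ?inE; exact: erefl.
  + by apply: (@two _ _ _ _ (o0,o2) (o2,o0)); rewrite /rook_rel /cart_rel /complete_rel ?inE; exact: erefl.
- by move=> i; exists ord0; rewrite inE eqxx orbT.
- by move=> j; exists ord0; rewrite inE eqxx.
- have sub : DS \subset [set (ord0, j) | j : 'I_3] :|: [set (i, ord0) | i in [set~ (ord0 : 'I_3)]].
    apply/subsetP => -[i j]; rewrite inE /= => /orP [/eqP->|/eqP->].
      by rewrite inE imset_f.
    case: (boolP (i == ord0)) => [/eqP->|h]; first by rewrite inE imset_f.
    by rewrite inE; apply/orP; right; apply/imsetP; exists i; rewrite ?inE.
  apply: leq_trans (subset_leq_card sub) _; rewrite cardsU.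
  apply: leq_trans (leq_subr _ _) _.
  have e1 := leq_imset_card (fun j : 'I_3 => (ord0 : 'I_3, j)) 'I_3.
  have e2 := leq_imset_card (fun i : 'I_3 => (i, ord0 : 'I_3)) [set~ (ord0 : 'I_3)].
  rewrite cardsC1 card_ord in e2; rewrite card_ord in e1.
  exact: (leq_add e1 e2).
Qed.


Lemma constr n m : reg n m || sok n m -> Good n m (cc n m).
Proof.
have [s] := ubnP (n + m); elim: s n m => // s IH n m Hs H.
case/orP: H => [Hr|].
  case: (boolP (base n m)) => hb.
    move: hb; rewrite /base.
    case/orP => [/andP[/eqP-> /eqP->]|]; first exact: ds_good.
    case/orP => [/andP[/eqP-> /eqP->]|].
      exact: (block (star_row (isT : 3 <= 4)) (star_col (isT : 3 <= 3))).
    case/orP => [/andP[/eqP-> /eqP->]|].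
      exact: (block (star_row (isT : 3 <= 3)) (star_col (isT : 3 <= 4))).
    case/orP => [/andP[/eqP-> /eqP->]|].
      exact: (block (star_row (isT : 3 <= 4)) (star_col (isT : 3 <= 4))).
    case/orP => [/andP[/eqP-> /eqP->]|].
      exact: (block (star_row (isT : 3 <= 5)) (star_col (isT : 3 <= 4))).
    case/orP => [/andP[/eqP-> /eqP->]|].
      exact: (block (star_row (isT : 3 <= 4)) (star_col (isT : 3 <= 5))).
    case/orP => [/andP[/eqP-> /eqP->]|/andP[/eqP-> /eqP->]].
      exact: (block (star_row (isT : 3 <= 5)) (star_col (isT : 3 <= 5))).
    exact: (block ds_good (block (star_row (isT : 3 <= 3)) (star_col (isT : 3 <= 3)))).
  case: (leqP n m) => hnm.
    have /and3P [h1 h3 hrs] := land13 Hr hb hnm.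
    have G := IH (n-1) (m-3) ltac:(lia) hrs.
    have := block G (star_row (leqnn 3)).
    by rewrite subnK // subnK // cc_peel13.
  have /and3P [h3 h1 hrs] := land31 Hr hb hnm.
  have G := IH (n-3) (m-1) ltac:(lia) hrs.
  have := block G (star_col (leqnn 3)).
  by rewrite subnK // subnK // cc_peel31.
case/orP => /andP [/eqP-> /andP [h3 hc]].
  exact: Good_weak hc (star_row h3).
exact: Good_weak hc (star_col h3).
Qed.


Lemma final_ar n m E : 3*((n+4)+(m+4)) <= 4*E ->
  (4*E = 3*((n+4)+(m+4)) -> (3*(m+4)+7*(n+4)) %% 8 = 0) -> cc n m + 6 <= E.
Proof. rewrite /cc; lia. Qed.

Lemma gamma_le (T : finType) (e : rel T) S :
  total2dom e setT -> total2dom e S -> gamma2t e <= #|S|.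
Proof.
move=> hT hS; rewrite /gamma2t.
by case: (arg_minnP (fun S : {set T} => #|S|) hT) => A _ /(_ S hS).
Qed.

Lemma gamma_spec (T : finType) (e : rel T) :
  total2dom e setT -> exists S, total2dom e S /\ #|S| = gamma2t e.
Proof.
move=> hT; rewrite /gamma2t.
by case: (arg_minnP (fun S : {set T} => #|S|) hT) => A hA _; exists A.
Qed.

Lemma exists_other k (j : 'I_k) : 2 <= k -> exists j', j' != j.
Proof.
move=> hk; have : 0 < #|[set~ j]| by rewrite cardsC1 card_ord; lia.
by case/card_gt0P => j'; rewrite !inE => h; exists j'.
Qed.

Lemma full_ok n m : 2 <= n -> 2 <= m -> total2dom (rook_rel n m) setT.
Proof.
move=> hn hm; apply/forallP => -[i j].
have [i' hi] := exists_other i hn; have [j' hj] := exists_other j hm.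
apply: (@two _ _ _ _ (i', j) (i, j')); rewrite ?inE //.
- by rewrite xpair_eqE negb_and hi.
- by rewrite rookE eqxx eq_sym hi orbT.
- by rewrite rookE eqxx eq_sym hj.
Qed.

Lemma rows2 n m (hn : 2 <= n) (hm : 2 <= m) :
  exists S : {set 'I_n * 'I_m}, total2dom (rook_rel n m) S /\ #|S| <= 2 * m.
Proof.
pose a0 : 'I_n := Ordinal (leq_trans (isT : 1 <= 2) hn).
pose a1 : 'I_n := Ordinal hn.
exists ([set (a0, j) | j : 'I_m] :|: [set (a1, j) | j : 'I_m]); split.
- apply/forallP => -[i j].
  have [j' hj] := exists_other j hm.
  have ne : a0 != a1 by [].
  case: (boolP (i == a0)) => [/eqP->|h0].
    apply: (@two _ _ _ _ (a1, j) (a0, j')).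
    + by rewrite inE; apply/orP; right; apply/imsetP; exists j.
    + by rewrite inE; apply/orP; left; apply/imsetP; exists j'.
    + by rewrite xpair_eqE eq_sym (negbTE ne).
    + by rewrite rookE eqxx ne orbT.
    + by rewrite rookE eqxx eq_sym hj.
  case: (boolP (i == a1)) => [/eqP->|h1].
    apply: (@two _ _ _ _ (a0, j) (a1, j')).
    + by rewrite inE; apply/orP; left; apply/imsetP; exists j.
    + by rewrite inE; apply/orP; right; apply/imsetP; exists j'.
    + by rewrite xpair_eqE (negbTE ne).
    + by rewrite rookE eqxx ne orbT.
    + by rewrite rookE eqxx eq_sym hj.
  apply: (@two _ _ _ _ (a0, j) (a1, j)).
  + by rewrite inE; apply/orP; left; apply/imsetP; exists j.
  + by rewrite inE; apply/orP; right; apply/imsetP; exists j.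
  + by rewrite xpair_eqE (negbTE ne).
  + by rewrite rookE eqxx h0 orbT.
  + by rewrite rookE eqxx h1 orbT.
- rewrite cardsU; apply: leq_trans (leq_subr _ _) _.
  have e1 := leq_imset_card (fun j : 'I_m => (a0, j)) 'I_m.
  have e2 := leq_imset_card (fun j : 'I_m => (a1, j)) 'I_m.
  rewrite card_ord in e1 e2; apply: leq_trans (leq_add e1 e2) _; lia.
Qed.

Lemma cols2 n m (hn : 2 <= n) (hm : 2 <= m) :
  exists S : {set 'I_n * 'I_m}, total2dom (rook_rel n m) S /\ #|S| <= 2 * n.
Proof.
pose a0 : 'I_m := Ordinal (leq_trans (isT : 1 <= 2) hm).
pose a1 : 'I_m := Ordinal hm.
exists ([set (i, a0) | i : 'I_n] :|: [set (i, a1) | i : 'I_n]); split.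
- apply/forallP => -[i j].
  have [i' hi] := exists_other i hn.
  have ne : a0 != a1 by [].
  case: (boolP (j == a0)) => [/eqP->|h0].
    apply: (@two _ _ _ _ (i, a1) (i', a0)).
    + by rewrite inE; apply/orP; right; apply/imsetP; exists i.
    + by rewrite inE; apply/orP; left; apply/imsetP; exists i'.
    + by rewrite xpair_eqE [a1 == _]eq_sym (negbTE ne) andbF.
    + by rewrite rookE eqxx ne.
    + by rewrite rookE eqxx eq_sym hi orbT.
  case: (boolP (j == a1)) => [/eqP->|h1].
    apply: (@two _ _ _ _ (i, a0) (i', a1)).
    + by rewrite inE; apply/orP; left; apply/imsetP; exists i.
    + by rewrite inE; apply/orP; right; apply/imsetP; exists i'.
    + by rewrite xpair_eqE (negbTE ne) andbF.
    + by rewrite rookE eqxx ne.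
    + by rewrite rookE eqxx eq_sym hi orbT.
  apply: (@two _ _ _ _ (i, a0) (i, a1)).
  + by rewrite inE; apply/orP; left; apply/imsetP; exists i.
  + by rewrite inE; apply/orP; right; apply/imsetP; exists i.
  + by rewrite xpair_eqE (negbTE ne) andbF.
  + by rewrite rookE eqxx h0.
  + by rewrite rookE eqxx h1.
- rewrite cardsU; apply: leq_trans (leq_subr _ _) _.
  have e1 := leq_imset_card (fun i : 'I_n => (i, a0)) 'I_n.
  have e2 := leq_imset_card (fun i : 'I_n => (i, a1)) 'I_n.
  rewrite card_ord in e1 e2; apply: leq_trans (leq_add e1 e2) _; lia.
Qed.

Unset Implicit Arguments.

Theorem theorem12 (n m : nat) (hn : 2 <= n) (hm : 2 <= m) :
  (exists S : {set 'I_n * 'I_m},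
      [/\ total2dom (rook_rel n m) S,
          #|S| = gamma2t (rook_rel n m),
          (forall v : 'I_n, exists w : 'I_m, (v, w) \in S)
        & (forall w : 'I_m, exists v : 'I_n, (v, w) \in S)]) ->
  gamma2t (rook_rel (n + 4) (m + 4)) = gamma2t (rook_rel n m) + 6.
Proof.
case=> S0 [T0 K0 R0 C0].
have fullnm := full_ok hn hm.
have fullNM : total2dom (rook_rel (n+4) (m+4)) setT.
  by apply: full_ok; lia.
set g := gamma2t (rook_rel n m) in K0 *.
have Gg : Good n m g by exists S0; split => //; rewrite K0.
apply/eqP; rewrite eqn_leq; apply/andP; split.
  have [S [TS _ _ KS]] := block Gg (block (star_row (leqnn 3)) (star_col (leqnn 3))).
  exact: leq_trans (gamma_le fullNM TS) KS.
have [S [TS KS]] := gamma_spec fullNM; rewrite -KS.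
have gm : g <= 2 * m.
  by have [A [TA KA]] := rows2 hn hm; exact: leq_trans (gamma_le fullnm TA) KA.
have gn : g <= 2 * n.
  by have [A [TA KA]] := cols2 hn hm; exact: leq_trans (gamma_le fullnm TA) KA.
have gc : g <= cc n m.
  case: (boolP (reg n m)) => hr.
    have [A [TA _ _ KA]] : Good n m (cc n m) by apply: constr; rewrite hr.
    exact: leq_trans (gamma_le fullnm TA) KA.
  move: hr; rewrite /reg -leqNgt => hr; apply: leq_trans hr.
  by rewrite /minn; case: ifP.
case: (boolP [exists i, rS S i == 0]) => [/existsP [i /eqP hi]|hr].
  by have := LB_row TS hi => h; apply: leq_trans h; lia.
case: (boolP [exists j, cS S j == 0]) => [/existsP [j /eqP hj]|hc].
  by have := LB_col TS hj => h; apply: leq_trans h; lia.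
have hr' : forall i, 0 < rS S i.
  move=> i; rewrite lt0n; apply/negP => h; case/negP: hr; apply/existsP; exists i; exact h.
have hc' : forall j, 0 < cS S j.
  move=> j; rewrite lt0n; apply/negP => h; case/negP: hc; apply/existsP; exists j; exact h.
have [A1 A2] := LB_A TS hr' hc'.
by apply: leq_trans (final_ar A1 A2); rewrite leq_add2r.
Qed.
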